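(* For every fixed integer $r\geq 1$ and every $\epsilon>0$, for all sufficiently large $k$, $$AW(k;r)\geq \frac{k^{2r-1-\epsilon}}{2^{r-1}(40r)^{r^2-1}}.$$
   Context: A sequence of positive integers $w_1<\dots<w_n$ is an ascending wave if $w_{i+1}-w_i \geq w_i-w_{i-1}$ for $2\le i\le n-1$. For positive integers $k,r$, $AW(k;r)$ denotes the least positive integer $N$ such that every $r$-coloring of $\{1,\dots,N\}$ contains a $k$-term monochromatic ascending wave. *)

(* Defs.v *)
From Stdlib Require Import Reals Arith Lia.

Definition ascending_wave (k : nat) (w : nat -> nat) : Prop :=
  (forall i, i < k -> 1 <= w i) /\
  (forall i, i + 1 < k -> w i < w (i + 1)) /\
  (forall i, 1 <= i -> i + 1 < k -> w (i + 1) - w i >= w i - w (i - 1)).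

Definition AW_prop (k r N : nat) : Prop :=
  forall c : nat -> nat,
    (forall x, 1 <= x <= N -> c x < r) ->
    exists w : nat -> nat,
      ascending_wave k w /\
      (forall i, i < k -> w i <= N) /\
      (forall i j, i < k -> j < k -> c (w i) = c (w j)).

(* AW(k;r) = least positive N with AW_prop k r N.  "AW(k;r) >= x" is stated as:
   every positive N with the property satisfies N >= x (equivalent for the
   least such N, which exists). *)
Definition AW_ge (k r : nat) (x : R) : Prop :=
  forall N : nat, 1 <= N -> AW_prop k r N -> (x <= INR N)%R.

(* Main.v *)
Require Import Defs.
From Stdlib Require Import Reals.
From Stdlib Require Import Lra Lia Psatz ZArith Arith Classical_Prop.
Open Scope R_scope.

Open Scope R_scope.

Lemma ln_le_sub1 : forall x, 0 < x -> ln x <= x - 1.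
Proof.
  intros x Hx. pose proof (exp_ineq1_le (ln x)) as H.
  rewrite exp_ln in H by lra. lra.
Qed.

Lemma ln_diff : forall a b, 0 < b -> b < a -> (a - b) / a <= ln a - ln b.
Proof.
  intros a b Hb Hab.
  assert (Ha : 0 < a) by lra.
  pose proof (ln_le_sub1 (b / a)) as H.
  assert (0 < b / a) by (apply Rdiv_lt_0_compat; lra).
  specialize (H H0).
  unfold Rdiv in H. rewrite ln_mult in H by (try apply Rinv_0_lt_compat; lra).
  rewrite ln_Rinv in H by lra.
  assert (E : b / a - 1 = - ((a - b) / a)) by (field; lra).
  lra.
Qed.

Section Conv.
Variable y : nat -> R.
Variable h : R.
Variable n : nat.
Hypothesis Hc : forall t, (t + 2 <= n)%nat ->
  y (t+2)%nat - y (t+1)%nat - (y (t+1)%nat - y t) >= h.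

Lemma zstep : forall j t, (t + j + 1 <= n)%nat ->
  y (t+j+1)%nat - y (t+j)%nat >= y (t+1)%nat - y t + INR j * h.
Proof.
  induction j; intros t Ht.
  - simpl. replace (t+0+1)%nat with (t+1)%nat by lia.
    replace (t+0)%nat with t by lia. lra.
  - rewrite S_INR.
    specialize (IHj t ltac:(lia)).
    specialize (Hc (t+j) ltac:(lia)).
    replace (t + j + 2)%nat with (t + S j + 1)%nat in Hc by lia.
    replace (t + j + 1)%nat with (t + S j)%nat in Hc, IHj by lia.
    lra.
Qed.

Lemma conv_mid : forall m, (2*m <= n)%nat ->
  y 0%nat + y (2*m)%nat - 2 * y m >= INR m * INR m * h.
Proof.
  intros m Hm.
  assert (A : forall i, (i <= m)%nat ->
    y (m+i)%nat - y m >= y i - y 0%nat + INR i * INR m * h).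
  { induction i; intros Hi.
    - replace (m+0)%nat with m by lia. simpl. lra.
    - specialize (IHi ltac:(lia)).
      pose proof (zstep m i ltac:(lia)) as Z.
      replace (i + m + 1)%nat with (m + S i)%nat in Z by lia.
      replace (i + m)%nat with (m + i)%nat in Z by lia.
      replace (i+1)%nat with (S i) in Z by lia.
      rewrite S_INR. lra. }
  specialize (A m (le_n m)).
  replace (m+m)%nat with (2*m)%nat in A by lia. lra.
Qed.
End Conv.

Definition excl (r c : nat) (y : R) : Prop :=
  (Int_part y mod Z.of_nat r)%Z = Z.of_nat c.

Lemma Int_part_shift : forall y z, Int_part (y + IZR z) = (Int_part y + z)%Z.
Proof.
  intros y z. symmetry. apply Int_part_spec.
  destruct (base_Int_part y) as [H1 H2]. rewrite plus_IZR. lra.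
Qed.

Lemma excl_shift : forall r c y w, (r > 0)%nat ->
  (excl r c (y + IZR (Z.of_nat r * w)) <-> excl r c y).
Proof.
  intros r c y w Hr. unfold excl. rewrite Int_part_shift.
  rewrite Z.mul_comm, Z.mod_add by lia. tauto.
Qed.

Lemma Int_part_eq : forall y z, IZR z <= y < IZR z + 1 -> Int_part y = z.
Proof. intros y z H. symmetry. apply Int_part_spec. lra. Qed.

Lemma component : forall (r c : nat) (y : nat -> R) (n : nat),
  (r > 0)%nat -> (c < r)%nat ->
  (forall t, (t <= n)%nat -> ~ excl r c (y t)) ->
  (forall t, (t < n)%nat -> Rabs (y (S t) - y t) < 1) ->
  exists z : Z, forall t, (t <= n)%nat -> IZR z + 1 <= y t < IZR z + INR r.
Proof.
  intros r c y n Hr Hc Hall Hstep.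
  set (z0 := Int_part (y 0%nat)).
  set (z := (z0 - ((z0 - Z.of_nat c) mod Z.of_nat r))%Z).
  assert (Hrz : (0 < Z.of_nat r)%Z) by lia.
  pose proof (Z.mod_pos_bound (z0 - Z.of_nat c) (Z.of_nat r) Hrz) as Hb.
  assert (Hzc : (z mod Z.of_nat r = Z.of_nat c)%Z).
  { unfold z. rewrite Zminus_mod. rewrite Zmod_mod.
    rewrite <- Zminus_mod. replace (z0 - (z0 - Z.of_nat c))%Z with (Z.of_nat c) by lia.
    apply Z.mod_small. lia. }
  exists z.
  assert (Hex : forall t, (t <= n)%nat -> forall w : Z, (w mod Z.of_nat r = Z.of_nat c)%Z ->
     ~ (IZR w <= y t < IZR w + 1)).
  { intros t Ht w Hw Hin. apply (Hall t Ht). unfold excl.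
    rewrite (Int_part_eq _ _ Hin). exact Hw. }
  assert (Hzr : ((z + Z.of_nat r) mod Z.of_nat r = Z.of_nat c)%Z).
  { rewrite <- (Z.mul_1_l (Z.of_nat r)) at 1. rewrite Z.mod_add by lia. exact Hzc. }
  induction t; intros Ht.
  - destruct (base_Int_part (y 0%nat)) as [B1 B2]. fold z0 in B1, B2.
    assert (Hle : (z <= z0)%Z) by (unfold z; lia).
    assert (Hlt : (z0 < z + Z.of_nat r)%Z) by (unfold z; lia).
    assert (Hne : z <> z0).
    { intro E. apply (Hex 0%nat ltac:(lia) z Hzc). rewrite E. lra. }
    assert (H : (z + 1 <= z0)%Z) by lia.
    assert (Hlt' : (z0 + 1 <= z + Z.of_nat r)%Z) by lia.
    apply IZR_le in Hlt'. rewrite !plus_IZR, <- INR_IZR_INZ in Hlt'.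
    apply IZR_le in Hle. apply IZR_lt in Hlt.
    apply IZR_le in H. rewrite plus_IZR in H, Hlt. rewrite <- INR_IZR_INZ in Hlt.
    simpl in H. clearbody z z0. split; [clear -B1 H; lra | clear -Hlt' B1 B2; lra].
  - clearbody z z0. specialize (IHt ltac:(lia)).
    specialize (Hstep t ltac:(lia)). apply Rabs_def2 in Hstep.
    split.
    + destruct (Rle_or_lt (IZR z + 1) (y (S t))) as [|Hl]; [assumption|].
      exfalso. apply (Hex (S t) Ht z Hzc). lra.
    + destruct (Rlt_or_le (y (S t)) (IZR z + INR r)) as [|Hl]; [assumption|].
      exfalso. apply (Hex (S t) Ht (z + Z.of_nat r)%Z Hzr).
      rewrite plus_IZR, <- INR_IZR_INZ. lra.
Qed.

Lemma first_fail : forall (Pr : nat -> Prop) s e, (s <= e)%nat ->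
  (forall i, (s <= i < e)%nat -> Pr i) \/
  (exists j, (s <= j < e)%nat /\ ~ Pr j /\ forall i, (s <= i < j)%nat -> Pr i).
Proof.
  intros Pr s e Hse. induction e.
  - left. intros; lia.
  - destruct (Nat.eq_dec s (S e)) as [->|Hne].
    + left. intros; lia.
    + destruct (IHe ltac:(lia)) as [Hall|Hex].
      * destruct (Classical_Prop.classic (Pr e)) as [He|He].
        -- left. intros i Hi. destruct (Nat.eq_dec i e) as [->|]; [auto|apply Hall; lia].
        -- right. exists e. repeat split; try lia; auto.
      * right. destruct Hex as [j [Hj [Hnj Hb]]]. exists j. repeat split; try lia; auto.
Qed.


Open Scope R_scope.
Open Scope R_scope.

Lemma php : forall n (f : nat -> nat), (forall i, (i <= n)%nat -> (f i < n)%nat) ->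
  exists i j, (i < j <= n)%nat /\ f i = f j.
Proof.
  induction n; intros f Hf.
  - specialize (Hf 0%nat (le_n 0)). lia.
  - set (v := f (S n)).
    destruct (Classical_Prop.classic (exists i, (i <= n)%nat /\ f i = v)) as [[i [Hi E]]|Hno].
    + exists i, (S n). split; [lia|]. exact E.
    + set (g := fun i => if Nat.eqb (f i) n then v else f i).
      assert (Hg : forall i, (i <= n)%nat -> (g i < n)%nat).
      { intros i Hi. unfold g. destruct (Nat.eqb_spec (f i) n) as [E|E].
        - assert (v <> n).
          { intro Ev. apply Hno. exists i. split; [lia|]. rewrite E. auto. }
          specialize (Hf (S n) (le_n _)). fold v in Hf. lia.
        - specialize (Hf i ltac:(lia)). lia. }
      destruct (IHn g Hg) as [i [j [Hij E]]].
      exists i, j. split; [lia|].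
      unfold g in E.
      destruct (Nat.eqb_spec (f i) n); destruct (Nat.eqb_spec (f j) n).
      * congruence.
      * exfalso. apply Hno. exists j. split; [lia|]. auto.
      * exfalso. apply Hno. exists i. split; [lia|]. auto.
      * exact E.
Qed.

Lemma dirichlet : forall (beta : R) (M : nat), (1 <= M)%nat ->
  exists q : nat, (1 <= q <= M)%nat /\
    exists m : Z, Rabs (INR q * beta - IZR m) < / INR M.
Proof.
  intros beta M HM.
  set (f := fun j : nat => INR j * beta - IZR (Int_part (INR j * beta))).
  assert (Hf : forall j, 0 <= f j < 1).
  { intro j. unfold f. destruct (base_Int_part (INR j * beta)). lra. }
  assert (HMpos : 0 < INR M) by (apply lt_0_INR; lia).
  set (box := fun j => Z.to_nat (Int_part (INR M * f j))).
  assert (Hbox : forall j, IZR (Z.of_nat (box j)) <= INR M * f j < IZR (Z.of_nat (box j)) + 1).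
  { intro j. unfold box. destruct (base_Int_part (INR M * f j)) as [B1 B2].
    assert (0 <= INR M * f j) by (specialize (Hf j); nra).
    assert (Hnn : (0 <= Int_part (INR M * f j))%Z).
    { assert (IZR (Int_part (INR M * f j)) > -1) by lra.
      assert (Hz : (-1 < Int_part (INR M * f j))%Z).
      { apply lt_IZR. lra. } lia. }
    rewrite Z2Nat.id by exact Hnn. lra. }
  assert (Hbl : forall j, (j <= M)%nat -> (box j < M)%nat).
  { intros j _. specialize (Hbox j). specialize (Hf j).
    assert (IZR (Z.of_nat (box j)) < INR M) by nra.
    rewrite <- INR_IZR_INZ in H. apply INR_lt in H. exact H. }
  destruct (php M box Hbl) as [j1 [j2 [Hj E]]].
  exists (j2 - j1)%nat. split; [lia|].
  exists (Int_part (INR j2 * beta) - Int_part (INR j1 * beta))%Z.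
  pose proof (Hbox j1) as B1. pose proof (Hbox j2) as B2. rewrite E in B1.
  assert (Hd : Rabs (f j2 - f j1) < / INR M).
  { apply Rabs_def1.
    - apply (Rmult_lt_reg_l (INR M)); [lra|]. rewrite Rinv_r by lra. nra.
    - apply (Rmult_lt_reg_l (INR M)); [lra|].
      replace (INR M * - / INR M) with (-1) by (field; lra). nra. }
  rewrite minus_INR by lia. rewrite minus_IZR. unfold f in Hd.
  replace ((INR j2 - INR j1) * beta -
     (IZR (Int_part (INR j2 * beta)) - IZR (Int_part (INR j1 * beta))))
   with (INR j2 * beta - IZR (Int_part (INR j2 * beta)) -
      (INR j1 * beta - IZR (Int_part (INR j1 * beta)))) by ring.
  exact Hd.
Qed.

Open Scope R_scope.
Open Scope R_scope.

Section Phase.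
Variable phi : nat -> R.
Variable E : nat.
Variables r c : nat.
Variables kappa c0 : R.
Hypothesis Hr : (1 <= r)%nat.
Hypothesis Hcr : (c < r)%nat.
Hypothesis Hk : 0 < kappa.
Hypothesis Hc0 : 0 <= c0.
Hypothesis Hc0k : c0 * c0 * kappa >= 8 * INR r.
Definition d i := phi (S i) - phi i.
Hypothesis Hconv : forall i, (i + 1 < E)%nat -> d (S i) - d i >= kappa * d i * d i.
Hypothesis Hallow : forall i, (i <= E)%nat -> ~ excl r c (phi i).

Lemma d_mono1 : forall i, (i + 1 < E)%nat -> d i <= d (S i).
Proof. intros i Hi. specialize (Hconv i Hi). assert (0 <= kappa * d i * d i).
  { rewrite Rmult_assoc. apply Rmult_le_pos; [lra| apply Rle_0_sqr]. } lra. Qed.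

Lemma d_mono : forall i j, (i <= j)%nat -> (j < E)%nat -> d i <= d j.
Proof.
  intros i j Hij HjE. induction j.
  - replace i with 0%nat by lia. lra.
  - destruct (Nat.eq_dec i (S j)) as [->|Hne]; [lra|].
    specialize (IHj ltac:(lia) ltac:(lia)). pose proof (d_mono1 j ltac:(lia)). lra.
Qed.

Lemma tele_ge : forall a q lo, (forall j, (j < q)%nat -> lo <= d (a + j)) ->
  INR q * lo <= phi (a + q)%nat - phi a.
Proof.
  intros a q lo H. induction q.
  - simpl. replace (a+0)%nat with a by lia. lra.
  - rewrite S_INR. specialize (IHq (fun j Hj => H j ltac:(lia))).
    specialize (H q ltac:(lia)). unfold d in H.
    replace (a + S q)%nat with (S (a + q)) by lia. lra.
Qed.

Lemma tele_lt : forall a q hi, (1 <= q)%nat -> (forall j, (j < q)%nat -> d (a + j) < hi) ->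
  phi (a + q)%nat - phi a < INR q * hi.
Proof.
  intros a q hi Hq H. induction q.
  - lia.
  - rewrite S_INR. destruct (Nat.eq_dec q 0) as [->|Hq0].
    + specialize (H 0%nat ltac:(lia)). unfold d in H. simpl.
      replace (a+1)%nat with (S (a+0)) by lia. replace (a+0)%nat with a in * by lia. lra.
    + specialize (IHq ltac:(lia) (fun j Hj => H j ltac:(lia))).
      specialize (H q ltac:(lia)). unfold d in H.
      replace (a + S q)%nat with (S (a + q)) by lia. lra.
Qed.

Lemma d_growth : forall i q al, 0 <= al -> al <= d i -> (i + q < E)%nat ->
  d (i + q)%nat - d i >= INR q * (kappa * al * al).
Proof.
  intros i q al Hal Hdi. induction q; intros Hq.
  - simpl. replace (i+0)%nat with i by lia. lra.
  - rewrite S_INR. specialize (IHq ltac:(lia)).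
    pose proof (Hconv (i + q) ltac:(lia)) as Hc.
    replace (S (i + q)) with (i + S q)%nat in Hc by lia.
    assert (al <= d (i + q)%nat) by (pose proof (d_mono i (i+q) ltac:(lia) ltac:(lia)); lra).
    assert (kappa * al * al <= kappa * d (i+q)%nat * d (i+q)%nat).
    { rewrite !Rmult_assoc. apply Rmult_le_compat_l; [lra|]. apply Rmult_le_compat; lra. }
    lra.
Qed.

Lemma phase_bound : forall s P q (m : Z),
  (s + P <= E)%nat -> (1 <= P)%nat -> (1 <= q <= 2 * r)%nat ->
  0 < d s ->
  INR q * d s - INR r * IZR m > - / 2 ->
  (forall i, (s <= i < s + P)%nat -> INR q * d i - INR r * IZR m < 1) ->
  INR P <= 4 * INR r + c0 / d s.
Proof.
  intros s P q m HsP HP Hq Hal Hlo Hhi.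
  set (al := d s) in *.
  set (T := (P / q)%nat).
  assert (Hqpos : (0 < q)%nat) by lia.
  assert (HT : (T * q <= P < (T + 1) * q)%nat).
  { unfold T. pose proof (Nat.div_mod_eq P q). pose proof (Nat.mod_upper_bound P q ltac:(lia)). nia. }
  set (y := fun t : nat => phi (s + t * q)%nat - INR t * (INR r * IZR m)).
  assert (Hqr : 0 < INR q) by (apply lt_0_INR; lia).
  assert (Hinc : forall t, (t < T)%nat ->
     - / 2 < y (S t) - y t < 1).
  { intros t Ht. unfold y.
    replace (s + S t * q)%nat with ((s + t * q) + q)%nat by lia.
    rewrite S_INR.
    assert (L : INR q * al <= phi (s + t * q + q)%nat - phi (s + t * q)%nat).
    { apply tele_ge. intros j Hj. apply d_mono; nia. }
    assert (U : phi (s + t * q + q)%nat - phi (s + t * q)%nat < INR q * ((1 + INR r * IZR m) / INR q)).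
    { apply tele_lt; [lia|]. intros j Hj. specialize (Hhi (s + t*q + j)%nat ltac:(nia)).
      apply (Rmult_lt_reg_l (INR q)); [lra|]. field_simplify; lra. }
    replace (INR q * ((1 + INR r * IZR m) / INR q)) with (1 + INR r * IZR m) in U by (field; lra).
    split; nra. }
  assert (Hsec : forall t, (t + 2 <= T)%nat ->
     y (t+2)%nat - y (t+1)%nat - (y (t+1)%nat - y t) >= INR q * INR q * (kappa * al * al)).
  { intros t Ht. unfold y.
    replace (s + (t+2) * q)%nat with ((s + t*q) + q + q)%nat by lia.
    replace (s + (t+1) * q)%nat with ((s + t*q) + q)%nat by lia.
    set (a := (s + t * q)%nat).
    assert (G : forall j, (j <= q)%nat ->
      (phi (a + q + j)%nat - phi (a + j)%nat) - (phi (a + q)%nat - phi a) >= INR j * (INR q * (kappa * al * al))).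
    { induction j; intros Hj.
      - simpl. replace (a + q + 0)%nat with (a+q)%nat by lia. replace (a+0)%nat with a by lia. lra.
      - specialize (IHj ltac:(lia)). rewrite S_INR.
        pose proof (d_growth (a + j) q al ltac:(lra)) as Dg.
        assert (al <= d (a + j)%nat) by (apply d_mono; unfold a; nia).
        specialize (Dg H ltac:(unfold a; nia)). unfold d in Dg.
        replace (S (a + j + q)) with (a + q + S j)%nat in Dg by lia.
        replace (a + j + q)%nat with (a + q + j)%nat in Dg by lia.
        replace (S (a+j)) with (a + S j)%nat in Dg by lia. lra. }
    specialize (G q (le_n q)). rewrite !plus_INR. simpl (INR 2). simpl (INR 1). lra. }
  assert (Hnot : forall t, (t <= T)%nat -> ~ excl r c (y t)).
  { intros t Ht. unfold y.
    replace (INR t * (INR r * IZR m)) with (- IZR (Z.of_nat r * (- Z.of_nat t * m))).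
    2:{ rewrite !mult_IZR, opp_IZR, <- !INR_IZR_INZ. ring. }
    unfold Rminus. rewrite Ropp_involutive.
    rewrite excl_shift by lia. apply Hallow. nia. }
  destruct (component r c y T ltac:(lia) Hcr Hnot) as [z Hz].
  { intros t Ht. specialize (Hinc t Ht). apply Rabs_def1; lra. }
  set (m' := (T / 2)%nat).
  assert (Hm' : (2 * m' <= T <= 2 * m' + 1)%nat).
  { unfold m'. pose proof (Nat.div_mod_eq T 2). pose proof (Nat.mod_upper_bound T 2 ltac:(lia)). lia. }
  pose proof (conv_mid y (INR q * INR q * (kappa * al * al)) T Hsec m' ltac:(lia)) as CM.
  pose proof (Hz 0%nat ltac:(lia)). pose proof (Hz m' ltac:(lia)). pose proof (Hz (2*m')%nat ltac:(lia)).
  assert (Hsq : INR m' * INR m' * (INR q * INR q * (kappa * al * al)) < 2 * INR r) by lra.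
  assert (HPn : (P + 1 <= (2 * m' + 2) * q)%nat) by nia.
  apply le_INR in HPn. rewrite plus_INR, mult_INR, plus_INR, mult_INR in HPn. simpl (INR 1) in HPn.
  simpl (INR 2) in HPn.
  assert (Hq2 : INR q <= 2 * INR r).
  { replace 2 with (INR 2) by (simpl; lra). rewrite <- mult_INR. apply le_INR. lia. }
  assert (X : 2 * INR q * INR m' * al < c0).
  { assert (Hm0 : 0 <= INR m') by apply pos_INR.
    assert (Hx0 : 0 <= 2 * INR q * INR m' * al) by (repeat apply Rmult_le_pos; lra).
    assert (Hxx : (2 * INR q * INR m' * al) * (2 * INR q * INR m' * al) * kappa < c0 * c0 * kappa) by nra.
    assert (Hxx' : (2 * INR q * INR m' * al) * (2 * INR q * INR m' * al) < c0 * c0).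
    { apply (Rmult_lt_reg_r kappa); lra. }
    nra. }
  assert (Y : 2 * INR q * INR m' < c0 / al).
  { apply (Rmult_lt_reg_r al); [lra|].
    replace (c0 / al * al) with c0 by (field; lra). lra. }
  lra.
Qed.

Variable A : R.
Hypothesis HA : 1 <= A.
Definition delta := / (4 * INR r).
Definition F (al : R) := 16 * INR r * INR r * (A - al + delta) + 4 * INR r * c0 * (ln A - ln (al - delta)).

Lemma delta_facts : 0 < delta <= / 4.
Proof.
  unfold delta. assert (1 <= INR r) by (apply (le_INR 1); lia).
  split. apply Rinv_0_lt_compat; lra.
  apply Rinv_le_contravar; lra.
Qed.

Lemma F_step_aux : forall al, 1 <= al -> 4 * INR r * c0 * (ln al - ln (al - delta)) >= c0 / al.
Proof.
  intros al Hal. destruct delta_facts as [D1 D2].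
  pose proof (ln_diff al (al - delta) ltac:(lra) ltac:(lra)) as L.
  replace ((al - (al - delta)) / al) with (delta / al) in L by (field; lra).
  assert (E1 : 4 * INR r * c0 * (delta / al) = c0 / al).
  { unfold delta. field. split; [lra|]. assert (1 <= INR r) by (apply (le_INR 1); lia). lra. }
  assert (0 <= 4 * INR r * c0).
  { assert (1 <= INR r) by (apply (le_INR 1); lia). apply Rmult_le_pos; lra. }
  rewrite <- E1. apply Rle_ge. apply Rmult_le_compat_l; lra.
Qed.

Lemma r16delta : 16 * INR r * INR r * delta = 4 * INR r.
Proof. unfold delta. field. assert (1 <= INR r) by (apply (le_INR 1); lia). lra. Qed.

Lemma F_step : forall al, 1 <= al -> F al >= 4 * INR r + c0 / al + F (al + delta).
Proof.
  intros al Hal. pose proof (F_step_aux al Hal). pose proof r16delta.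
  unfold F. replace (al + delta - delta) with al by ring. nra.
Qed.

Lemma F_one : forall al, 1 <= al -> al < A -> F al >= 4 * INR r + c0 / al.
Proof.
  intros al Hal HaA. pose proof (F_step_aux al Hal). pose proof r16delta.
  destruct delta_facts.
  assert (ln al <= ln A) by (apply Rlt_le, ln_increasing; lra).
  assert (0 <= 4 * INR r * c0).
  { assert (1 <= INR r) by (apply (le_INR 1); lia). apply Rmult_le_pos; lra. }
  assert (1 <= INR r) by (apply (le_INR 1); lia).
  unfold F. nra.
Qed.

Lemma F_anti : forall a b, 1 <= a -> a <= b -> F b <= F a.
Proof.
  intros a b Ha Hab. destruct delta_facts.
  assert (ln (a - delta) <= ln (b - delta)).
  { destruct (Req_dec a b) as [->|]; [lra|]. apply Rlt_le, ln_increasing; lra. }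
  assert (0 <= 4 * INR r * c0).
  { assert (1 <= INR r) by (apply (le_INR 1); lia). apply Rmult_le_pos; lra. }
  assert (1 <= INR r) by (apply (le_INR 1); lia).
  unfold F. nra.
Qed.

Lemma F_nonneg : 0 <= F 1.
Proof.
  destruct delta_facts.
  assert (ln (1 - delta) < 0). { rewrite <- ln_1. apply ln_increasing; lra. }
  assert (0 <= ln A). { rewrite <- ln_1. destruct (Req_dec A 1) as [->|]; [lra|]. apply Rlt_le, ln_increasing; lra. }
  assert (0 <= 4 * INR r * c0).
  { assert (1 <= INR r) by (apply (le_INR 1); lia). apply Rmult_le_pos; lra. }
  assert (1 <= INR r) by (apply (le_INR 1); lia).
  unfold F. nra.
Qed.

Lemma cross_small : forall e n s, (e <= E)%nat -> n = (e - s)%nat -> (s < e)%nat ->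
  (forall i, (s <= i < e)%nat -> 1 <= d i < A) -> INR (e - s) <= F (d s).
Proof.
  intros e n. induction n as [n IH] using lt_wf_ind.
  intros s HeE Hn HsE Hd.
  remember (d s) as al eqn:Heqal.
  destruct (Hd s ltac:(lia)) as [Hal1 HalA]. rewrite <- Heqal in Hal1, HalA.
  assert (Hr2 : (1 <= 2 * r)%nat) by lia.
  destruct (dirichlet (al / INR r) (2 * r) Hr2) as [q [Hq [m Hm]]].
  assert (Hrpos : 0 < INR r) by (apply lt_0_INR; lia).
  assert (Hqm : Rabs (INR q * al - INR r * IZR m) < / 2).
  { replace (INR q * al - INR r * IZR m) with (INR r * (INR q * (al / INR r) - IZR m)) by (field; lra).
    rewrite Rabs_mult, Rabs_right by lra.
    rewrite mult_INR in Hm. simpl (INR 2) in Hm.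
    apply (Rmult_lt_compat_l (INR r)) in Hm; [|lra].
    replace (INR r * / ((1+1) * INR r)) with (/2) in Hm by (field; lra). exact Hm. }
  apply Rabs_def2 in Hqm. destruct Hqm as [Hqm1 Hqm2].
  destruct (first_fail (fun i => INR q * d i - INR r * IZR m < 1) s e ltac:(lia)) as [Hall|[j [Hj [Hnj Hbef]]]].
  - pose proof (phase_bound s (e - s) q m ltac:(lia) ltac:(lia) Hq ltac:(rewrite <- Heqal; lra) ltac:(rewrite <- Heqal; lra)
        ltac:(intros i Hi; apply Hall; lia)) as PB.
    rewrite <- Heqal in PB. pose proof (F_one al Hal1 HalA). lra.
  - assert (Hjs : j <> s). { intro; subst j. apply Hnj. rewrite <- Heqal. lra. }
    pose proof (phase_bound s (j - s) q m ltac:(lia) ltac:(lia) Hq ltac:(rewrite <- Heqal; lra) ltac:(rewrite <- Heqal; lra)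
        ltac:(intros i Hi; apply Hbef; lia)) as PB.
    rewrite <- Heqal in PB.
    assert (Hdj : d j >= al + delta).
    { apply Rnot_lt_ge in Hnj.
      assert (Hq1 : 1 <= INR q) by (apply (le_INR 1); lia).
      assert (Hq2 : INR q <= 2 * INR r).
      { replace 2 with (INR 2) by (simpl; lra). rewrite <- mult_INR. apply le_INR. lia. }
      assert (INR q * d j >= INR q * al + / 2) by lra.
      assert (d j >= al + / (2 * INR q)).
      { apply Rle_ge. apply (Rmult_le_reg_l (INR q)); [lra|].
        replace (INR q * (al + / (2 * INR q))) with (INR q * al + /2) by (field; lra). lra. }
      assert (/ (4 * INR r) <= / (2 * INR q)) by (apply Rinv_le_contravar; lra).
      unfold delta. lra. }
    specialize (IH (e - j)%nat ltac:(lia) j HeE eq_refl ltac:(lia) ltac:(intros i Hi; apply Hd; lia)).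
    pose proof (F_step al Hal1). pose proof (F_anti (al + delta) (d j)).
    destruct delta_facts.
    specialize (H0 ltac:(lra) ltac:(lra)).
    replace (e - s)%nat with ((j - s) + (e - j))%nat by lia. rewrite plus_INR. lra.
Qed.

Lemma cross_all : forall s, (s <= E)%nat -> 0 < A ->
  (forall i, (s <= i < E)%nat -> 1 <= d i) ->
  INR (E - s) <= F 1 + (phi E - phi s) / A.
Proof.
  intros s HsE HA0 Hd.
  pose proof F_nonneg as F0.
  assert (Hmon : forall a b, (s <= a <= b)%nat -> (b <= E)%nat -> INR (b - a) <= phi b - phi a).
  { intros a b Hab HbE. pose proof (tele_ge a (b - a) 1 (fun j Hj => Hd (a + j)%nat ltac:(lia))).
    replace (a + (b - a))%nat with b in H by lia. lra. }
  assert (Hdiv : forall x, 0 <= x -> 0 <= x / A) by (intros; unfold Rdiv; apply Rmult_le_pos; [lra|left; apply Rinv_0_lt_compat; lra]).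
  destruct (first_fail (fun i => d i < A) s E HsE) as [Hall|[j [Hj [Hnj Hbef]]]].
  - destruct (Nat.eq_dec s E) as [->|Hne].
    + replace (E - E)%nat with 0%nat by lia. simpl.
      pose proof (Hdiv (phi E - phi E) ltac:(lra)). lra.
    + pose proof (cross_small E (E - s) s (le_n E) eq_refl ltac:(lia)
        (fun i Hi => conj (Hd i Hi) (Hall i Hi))) as CS.
      pose proof (F_anti 1 (d s) ltac:(lra) (Hd s ltac:(lia))).
      pose proof (Hmon s E ltac:(lia) (le_n E)).
      pose proof (pos_INR (E - s)).
      pose proof (Hdiv (phi E - phi s) ltac:(lra)). lra.
  - apply Rnot_lt_ge in Hnj.
    assert (Small : INR (j - s) <= F 1).
    { destruct (Nat.eq_dec s j) as [->|Hne].
      - replace (j - j)%nat with 0%nat by lia. simpl. lra.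
      - pose proof (cross_small j (j - s) s ltac:(lia) eq_refl ltac:(lia)
          (fun i Hi => conj (Hd i ltac:(lia)) (Hbef i Hi))) as CS.
        pose proof (F_anti 1 (d s) ltac:(lra) (Hd s ltac:(lia))). lra. }
    assert (Big : INR (E - j) * A <= phi E - phi j).
    { assert (forall i, (j <= i < E)%nat -> A <= d i).
      { intros i Hi. pose proof (d_mono j i ltac:(lia) ltac:(lia)). lra. }
      pose proof (tele_ge j (E - j) A (fun t Ht => H (j + t)%nat ltac:(lia))).
      replace (j + (E - j))%nat with E in H0 by lia. lra. }
    assert (Hjs : phi s <= phi j) by (pose proof (Hmon s j ltac:(lia) ltac:(lia)); pose proof (pos_INR (j - s)); lra).
    assert (INR (E - j) <= (phi E - phi s) / A).
    { apply (Rmult_le_reg_r A); [lra|]. unfold Rdiv. rewrite Rmult_assoc, Rinv_l by lra. lra. }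
    replace (E - s)%nat with ((j - s) + (E - j))%nat by lia. rewrite plus_INR. lra.
Qed.
End Phase.

Open Scope nat_scope.
Open Scope nat_scope.

Definition Good (r k N : nat) (col : nat -> nat) : Prop :=
  (forall x, 1 <= x <= N -> col x < r) /\
  forall n w, ascending_wave n w -> (forall i, i < n -> w i <= N) ->
    (forall i, i < n -> col (w i) = col (w 0)) -> n < k.

Lemma good_base : forall k, 1 <= k -> Good 1 k (k - 1) (fun _ => 0).
Proof.
  intros k Hk. split; [intros; lia|].
  intros n w [Hpos [Hinc _]] Hle _.
  destruct n as [|n]; [lia|].
  assert (forall i, i <= n -> i + 1 <= w i).
  { induction i; intros Hi. - specialize (Hpos 0 ltac:(lia)). lia.
    - specialize (IHi ltac:(lia)). specialize (Hinc i ltac:(lia)).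
      replace (i+1) with (S i) in Hinc by lia. lia. }
  specialize (H n (le_n n)). specialize (Hle n ltac:(lia)). lia.
Qed.

Fixpoint cstart (b : nat -> nat) (x : nat) : nat :=
  match x with
  | 0 => 0
  | S y => if Nat.eqb (b (S y)) (b y) then cstart b y else S y
  end.

Lemma cstart_le : forall b x, cstart b x <= x.
Proof. intros b x. induction x; simpl; [lia|]. destruct (Nat.eqb _ _); lia. Qed.

Lemma cstart_b : forall b x y, cstart b x <= y <= x -> b y = b x.
Proof.
  intros b x. induction x; intros y Hy.
  - simpl in Hy. replace y with 0 by lia. reflexivity.
  - simpl in Hy. destruct (Nat.eqb_spec (b (S x)) (b x)) as [E|E].
    + destruct (Nat.eq_dec y (S x)) as [->|Hne]; [reflexivity|].
      rewrite E. apply IHx. lia.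
    + replace y with (S x) by lia. reflexivity.
Qed.

Lemma cstart_same : forall b, (forall x y, x <= y -> b x <= b y) ->
  forall x1 x2, x1 <= x2 -> b x1 = b x2 -> cstart b x1 = cstart b x2.
Proof.
  intros b Hmon x1 x2. induction x2; intros H12 Hb.
  - replace x1 with 0 by lia. reflexivity.
  - destruct (Nat.eq_dec x1 (S x2)) as [->|Hne]; [reflexivity|].
    simpl. assert (b x2 = b (S x2)).
    { pose proof (Hmon x1 x2 ltac:(lia)). pose proof (Hmon x2 (S x2) ltac:(lia)). lia. }
    rewrite H. rewrite Nat.eqb_refl. apply IHx2; lia.
Qed.

Definition relabel (e y : nat) : nat := if y <? e then y else S y.

Lemma relabel_ne : forall e y, relabel e y <> e.
Proof. intros e y. unfold relabel. destruct (Nat.ltb_spec y e); lia. Qed.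

Lemma relabel_inj : forall e y1 y2, relabel e y1 = relabel e y2 -> y1 = y2.
Proof. intros e y1 y2. unfold relabel. destruct (Nat.ltb_spec y1 e); destruct (Nat.ltb_spec y2 e); lia. Qed.

Lemma relabel_lt : forall e y r, y < r - 1 -> 1 <= r -> relabel e y < r.
Proof. intros e y r H Hr. unfold relabel. destruct (Nat.ltb_spec y e); lia. Qed.

Section Constr.
Variables r M N : nat.
Variable col' : nat -> nat.
Definition TT := 2 * N.
Definition UU := TT * M.
Definition bb (x : nat) := (TT * x + x * x) / UU.
Definition colr (x : nat) := relabel (bb x mod r) (col' (x - cstart bb x + 1)).

Hypothesis HN : 1 <= N.
Hypothesis HM : 1 <= M.

Lemma UU_pos : 0 < UU.
Proof. unfold UU, TT. nia. Qed.

Lemma bb_mono : forall x y, x <= y -> bb x <= bb y.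
Proof. intros x y H. unfold bb. apply Nat.div_le_mono; [pose proof UU_pos; lia| nia]. Qed.

Lemma offset_lt : forall x, x - cstart bb x < M.
Proof.
  intro x. set (s := cstart bb x).
  assert (Hs : s <= x) by apply cstart_le.
  assert (Hb : bb s = bb x) by (apply cstart_b; lia).
  unfold bb in Hb. pose proof UU_pos as HU.
  pose proof (Nat.div_mod_eq (TT * s + s * s) UU) as E1.
  pose proof (Nat.div_mod_eq (TT * x + x * x) UU) as E2.
  pose proof (Nat.mod_upper_bound (TT * s + s * s) UU ltac:(lia)).
  pose proof (Nat.mod_upper_bound (TT * x + x * x) UU ltac:(lia)).
  rewrite Hb in E1.
  assert (TT * x + x * x - (TT * s + s * s) < UU) by lia.
  assert (TT * (x - s) <= TT * x + x * x - (TT * s + s * s)) by nia.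
  unfold UU in *. unfold TT in *. nia.
Qed.


Lemma wave_mono : forall n w, ascending_wave n w -> forall i j, i <= j -> j < n -> w i <= w j.
Proof.
  intros n w [_ [Hinc _]] i j Hij Hj. induction j.
  - replace i with 0 by lia. lia.
  - destruct (Nat.eq_dec i (S j)) as [->|]; [lia|].
    specialize (IHj ltac:(lia) ltac:(lia)). specialize (Hinc j ltac:(lia)).
    replace (j+1) with (S j) in Hinc by lia. lia.
Qed.

Variable k' : nat.
Hypothesis Hgood : Good (r - 1) k' M col'.

Lemma chunk : forall n w s e, ascending_wave n w -> e < n -> s <= e ->
  (forall i, s <= i <= e -> bb (w i) = bb (w s)) ->
  (forall i, s <= i <= e -> colr (w i) = colr (w s)) -> e - s + 1 < k'.
Proof.
  intros n w s e Hw Hen Hse Hb Hc.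
  set (st := cstart bb (w s)).
  assert (Hst : forall i, s <= i <= e -> cstart bb (w i) = st).
  { intros i Hi. symmetry. apply cstart_same; [apply bb_mono| |].
    - apply (wave_mono n w Hw); lia.
    - symmetry. apply Hb. exact Hi. }
  assert (Hge : forall i, s <= i <= e -> st <= w i).
  { intros i Hi. rewrite <- (Hst i Hi). apply cstart_le. }
  set (w' := fun t => w (s + t) - st + 1).
  destruct Hgood as [_ G].
  apply (G (e - s + 1) w').
  - destruct Hw as [Hpos [Hinc Hcv]]. split; [|split].
    + intros i Hi. unfold w'. lia.
    + intros i Hi. unfold w'. specialize (Hinc (s+i) ltac:(lia)).
      pose proof (Hge (s+i) ltac:(lia)). replace (s + (i+1)) with (s+i+1) by lia. lia.
    + intros i Hi1 Hi2. unfold w'. specialize (Hcv (s+i) ltac:(lia) ltac:(lia)).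
      pose proof (Hge (s+i) ltac:(lia)). pose proof (Hge (s+i+1) ltac:(lia)).
      pose proof (Hge (s+i-1) ltac:(lia)).
      replace (s + (i+1)) with (s+i+1) by lia. replace (s + (i-1)) with (s+i-1) by lia. lia.
  - intros i Hi. unfold w'. pose proof (offset_lt (w (s+i))). rewrite (Hst (s+i) ltac:(lia)) in H. lia.
  - intros i Hi. unfold w'. pose proof (Hc (s+i) ltac:(lia)) as Hci.
    unfold colr in Hci. rewrite (Hst (s+i) ltac:(lia)), (Hb (s+i) ltac:(lia)) in Hci.
    fold st in Hci. apply relabel_inj in Hci. rewrite Hci. replace (s+0) with s by lia. reflexivity.
Qed.

Lemma count_cells : forall a n w s e, ascending_wave n w -> e < n -> s <= e ->
  (forall i, s <= i <= e -> colr (w i) = colr (w s)) ->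
  (forall i, s <= i <= e -> bb (w i) < bb (w s) + a) -> e - s + 1 <= a * (k' - 1).
Proof.
  induction a; intros n w s e Hw Hen Hse Hc Hb.
  - specialize (Hb s ltac:(lia)). lia.
  - destruct (first_fail (fun i => bb (w i) = bb (w s)) s (e + 1) ltac:(lia)) as [Hall|[j [Hj [Hnj Hbef]]]].
    + pose proof (chunk n w s e Hw Hen Hse (fun i Hi => Hall i ltac:(lia)) Hc). nia.
    + assert (Hjs : j <> s) by (intro; subst; apply Hnj; reflexivity).
      pose proof (chunk n w s (j - 1) Hw ltac:(lia) ltac:(lia) (fun i Hi => Hbef i ltac:(lia))
                   (fun i Hi => Hc i ltac:(lia))) as C1.
      assert (Hgt : bb (w s) < bb (w j)).
      { pose proof (bb_mono (w s) (w j) (wave_mono n w Hw s j ltac:(lia) ltac:(lia))). lia. }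
      assert (IH := IHa n w j e Hw Hen ltac:(lia)).
      assert (Hc' : forall i, j <= i <= e -> colr (w i) = colr (w j)).
      { intros i Hi. rewrite (Hc i ltac:(lia)), (Hc j ltac:(lia)). reflexivity. }
      specialize (IH Hc').
      assert (Hb' : forall i, j <= i <= e -> bb (w i) < bb (w j) + a).
      { intros i Hi. specialize (Hb i ltac:(lia)). lia. }
      specialize (IH Hb'). nia.
Qed.

End Constr.

Open Scope R_scope.
Open Scope R_scope.

Lemma Int_part_div : forall a u : nat, (0 < u)%nat ->
  Int_part (INR a / INR u) = Z.of_nat (a / u).
Proof.
  intros a u Hu. apply Int_part_eq.
  pose proof (Nat.div_mod_eq a u) as E. pose proof (Nat.mod_upper_bound a u ltac:(lia)) as Hm.
  assert (Hur : 0 < INR u) by (apply lt_0_INR; lia).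
  rewrite <- INR_IZR_INZ.
  assert (Ea : INR a = INR u * INR (a / u) + INR (a mod u)).
  { rewrite E at 1. rewrite plus_INR, mult_INR. reflexivity. }
  assert (Hm' : INR (a mod u) + 1 <= INR u).
  { replace 1 with (INR 1) by reflexivity. rewrite <- plus_INR. apply le_INR. lia. }
  pose proof (pos_INR (a mod u)).
  split.
  - apply (Rmult_le_reg_l (INR u)); [lra|]. unfold Rdiv.
    replace (INR u * (INR a * / INR u)) with (INR a) by (field; lra). lra.
  - apply (Rmult_lt_reg_l (INR u)); [lra|]. unfold Rdiv.
    replace (INR u * (INR a * / INR u)) with (INR a) by (field; lra). lra.
Qed.

Lemma conv_real : forall T U X Y Z : R, 0 < T -> 0 < U -> 0 <= X -> X < Y -> Y < Z ->
  Y - X <= Z - Y -> X + Y <= T ->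
  let f := fun v => (T * v + v * v) / U in
  (f Z - f Y) - (f Y - f X) >= U / (2 * T * T) * ((f Y - f X) * (f Y - f X)).
Proof.
  intros T U X Y Z HT HU HX HXY HYZ Hd HXYT f. unfold f.
  set (D1 := Y - X). set (D2 := Z - Y).
  assert (Ea : (T * Y + Y * Y) / U - (T * X + X * X) / U = D1 * (T + X + Y) / U) by (unfold D1; field; lra).
  assert (Eb : (T * Z + Z * Z) / U - (T * Y + Y * Y) / U - ((T * Y + Y * Y) / U - (T * X + X * X) / U)
     = (T * (D2 - D1) + D2 * (Z + Y) - D1 * (Y + X)) / U) by (unfold D1, D2; field; lra).
  rewrite Eb, Ea.
  assert (L : 2 * D1 * D1 <= T * (D2 - D1) + D2 * (Z + Y) - D1 * (Y + X)).
  { unfold D1, D2 in *. nra. }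
  assert (Ha : 0 <= D1 * (T + X + Y) / U <= 2 * T * D1 / U).
  { unfold D1 in *. split.
    - apply Rmult_le_pos; [nra| left; apply Rinv_0_lt_compat; lra].
    - unfold Rdiv. apply Rmult_le_compat_r; [left; apply Rinv_0_lt_compat; lra| nra]. }
  set (a := D1 * (T + X + Y) / U) in *.
  assert (R1 : U / (2 * T * T) * (a * a) <= U / (2 * T * T) * ((2 * T * D1 / U) * (2 * T * D1 / U))).
  { apply Rmult_le_compat_l. { unfold Rdiv. apply Rmult_le_pos; [lra|]. left. apply Rinv_0_lt_compat. nra. }
    apply Rmult_le_compat; lra. }
  replace (U / (2 * T * T) * ((2 * T * D1 / U) * (2 * T * D1 / U))) with (2 * D1 * D1 / U) in R1 by (field; lra).
  apply Rle_ge. eapply Rle_trans; [exact R1|].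
  unfold Rdiv. apply Rmult_le_compat_r; [left; apply Rinv_0_lt_compat; lra| lra].
Qed.

Lemma ln_one_minus_delta : forall r, (1 <= r)%nat -> - ln (1 - delta r) <= / 3.
Proof.
  intros r Hr. unfold delta. assert (1 <= INR r) by (apply (le_INR 1); lia).
  assert (D : 0 < / (4 * INR r) <= / 4).
  { split. apply Rinv_0_lt_compat; lra. apply Rinv_le_contravar; lra. }
  set (t := / (4 * INR r)) in *.
  rewrite <- ln_Rinv by lra.
  pose proof (ln_le_sub1 (/ (1 - t))) as L.
  assert (0 < / (1 - t)) by (apply Rinv_0_lt_compat; lra).
  specialize (L H0).
  assert (/ (1 - t) <= 4 / 3).
  { replace (4/3) with (/ (3/4)) by (field). apply Rinv_le_contravar; lra. }
  lra.
Qed.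

Section Step.
Variables r M N k' k lam : nat.
Variable col' : nat -> nat.
Hypothesis Hr2 : (2 <= r)%nat.
Hypothesis HM : (1 <= M)%nat.
Hypothesis HN : (1 <= N)%nat.
Hypothesis Hk' : (1 <= k')%nat.
Hypothesis Hlam1 : (1 <= lam)%nat.
Hypothesis HNl : (2 * N <= lam * lam * M)%nat.
Hypothesis Hkk : (2 * r * k' <= k)%nat.
Hypothesis Hgood : Good (r - 1) k' M col'.
Hypothesis Hlam : 23 * INR r * INR r * INR lam * (1 + ln (INR lam)) <= INR k / 2.

Theorem step_good : Good r k N (colr r M N col').
Proof.
  split.
  - intros x Hx. unfold colr. apply relabel_lt; [|lia].
    destruct Hgood as [G1 _]. apply G1.
    pose proof (offset_lt M N HN HM x). lia.
  - intros n w Hw HwN Hmono.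
    destruct (Nat.eq_dec n 0) as [->|Hn0]; [lia|].
    set (E := (n - 1)%nat).
    set (col0 := colr r M N col' (w 0%nat)).
    assert (Hnot : forall i, (i < n)%nat -> (bb M N (w i) mod r <> col0)%nat).
    { intros i Hi E'. pose proof (Hmono i Hi) as Hc. fold col0 in Hc. unfold colr in Hc.
      rewrite E' in Hc. apply (relabel_ne col0 _ Hc). }
    assert (Hc0r : (col0 < r)%nat).
    { unfold col0, colr. apply relabel_lt; [|lia]. destruct Hgood as [G1 _]. apply G1.
      pose proof (offset_lt M N HN HM (w 0%nat)). lia. }
    set (phi := fun i => INR (TT N * w i + w i * w i)%nat / INR (UU M N)).
    assert (HU : (0 < UU M N)%nat) by (apply UU_pos; lia).
    assert (HUr : 0 < INR (UU M N)) by (apply lt_0_INR; lia).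
    assert (HTr : 0 < INR (TT N)) by (apply lt_0_INR; unfold TT; lia).
    assert (Hint : forall i, Int_part (phi i) = Z.of_nat (bb M N (w i))).
    { intro i. unfold phi, bb. apply Int_part_div. exact HU. }
    assert (Hallow : forall i, (i <= E)%nat -> ~ excl r col0 (phi i)).
    { intros i Hi Hex. unfold excl in Hex. rewrite Hint in Hex.
      rewrite <- Nat2Z.inj_mod in Hex. apply Nat2Z.inj in Hex. apply (Hnot i ltac:(lia) Hex). }
    set (kappa := INR (UU M N) / (2 * INR (TT N) * INR (TT N))).
    assert (Hkap : 0 < kappa).
    { unfold kappa. unfold Rdiv. apply Rmult_lt_0_compat; [lra|]. apply Rinv_0_lt_compat. nra. }
    destruct Hw as [Hpos [Hinc Hcv]].
    assert (Hconv : forall i, (i + 1 < E)%nat -> d phi (S i) - d phi i >= kappa * d phi i * d phi i).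
    { intros i Hi. unfold d.
      pose proof (Hcv (i+1)%nat ltac:(lia) ltac:(unfold E in Hi; lia)) as Hc.
      replace (i + 1 + 1)%nat with (S (S i)) in Hc by lia.
      replace (i + 1 - 1)%nat with i in Hc by lia. replace (i+1)%nat with (S i) in Hc by lia.
      pose proof (Hinc i ltac:(unfold E in Hi; lia)) as I1. pose proof (Hinc (S i) ltac:(unfold E in Hi; lia)) as I2.
      replace (i+1)%nat with (S i) in I1 by lia. replace (S i + 1)%nat with (S (S i)) in I2 by lia.
      pose proof (HwN (S (S i)) ltac:(unfold E in Hi; lia)) as HZ.
      pose proof (conv_real (INR (TT N)) (INR (UU M N)) (INR (w i)) (INR (w (S i))) (INR (w (S (S i))))
        HTr HUr (pos_INR _)) as CR.
      assert (A1 : INR (w i) < INR (w (S i))) by (apply lt_INR; lia).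
      assert (A2 : INR (w (S i)) < INR (w (S (S i)))) by (apply lt_INR; lia).
      assert (A3 : INR (w (S i)) - INR (w i) <= INR (w (S (S i))) - INR (w (S i))).
      { rewrite <- !minus_INR by lia. apply le_INR. lia. }
      assert (A4 : INR (w i) + INR (w (S i)) <= INR (TT N)).
      { rewrite <- plus_INR. apply le_INR. unfold TT. pose proof (HwN (S i) ltac:(unfold E in Hi; lia)). lia. }
      specialize (CR A1 A2 A3 A4). simpl in CR.
      unfold phi. rewrite !plus_INR, !mult_INR. unfold kappa.
      replace (INR (UU M N) / (2 * INR (TT N) * INR (TT N)) *
        ((INR (TT N) * INR (w (S i)) + INR (w (S i)) * INR (w (S i))) / INR (UU M N) -
         (INR (TT N) * INR (w i) + INR (w i) * INR (w i)) / INR (UU M N)) *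
        ((INR (TT N) * INR (w (S i)) + INR (w (S i)) * INR (w (S i))) / INR (UU M N) -
         (INR (TT N) * INR (w i) + INR (w i) * INR (w i)) / INR (UU M N)))
       with (INR (UU M N) / (2 * INR (TT N) * INR (TT N)) *
        (((INR (TT N) * INR (w (S i)) + INR (w (S i)) * INR (w (S i))) / INR (UU M N) -
         (INR (TT N) * INR (w i) + INR (w i) * INR (w i)) / INR (UU M N)) *
        ((INR (TT N) * INR (w (S i)) + INR (w (S i)) * INR (w (S i))) / INR (UU M N) -
         (INR (TT N) * INR (w i) + INR (w i) * INR (w i)) / INR (UU M N)))) by ring.
      exact CR. }

    set (c0 := 4 * INR r * INR lam).
    assert (Hr1 : (1 <= r)%nat) by lia.
    assert (Hrr : 2 <= INR r) by (apply (le_INR 2); lia).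
    assert (Hlr : 1 <= INR lam) by (apply (le_INR 1); lia).
    assert (HMr : 1 <= INR M) by (apply (le_INR 1); lia).
    assert (HNr : 1 <= INR N) by (apply (le_INR 1); lia).
    assert (HNl' : 2 * INR N <= INR lam * INR lam * INR M).
    { replace 2 with (INR 2) by (simpl; lra). rewrite <- !mult_INR. apply le_INR. lia. }
    assert (ET : INR (TT N) = 2 * INR N) by (unfold TT; rewrite mult_INR; simpl; lra).
    assert (EU : INR (UU M N) = 2 * INR N * INR M) by (unfold UU; rewrite mult_INR, ET; ring).
    assert (Hc0 : 0 <= c0) by (unfold c0; nra).
    assert (Hc0k : c0 * c0 * kappa >= 8 * INR r).
    { unfold c0, kappa. rewrite EU, ET.
      replace (4 * INR r * INR lam * (4 * INR r * INR lam) * (2 * INR N * INR M / (2 * (2 * INR N) * (2 * INR N))))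
        with (4 * (INR r * INR r * (INR lam * INR lam * INR M)) / INR N) by (field; lra).
      apply Rle_ge. apply (Rmult_le_reg_r (INR N)); [lra|].
      replace (4 * (INR r * INR r * (INR lam * INR lam * INR M)) / INR N * INR N)
        with (4 * (INR r * INR r * (INR lam * INR lam * INR M))) by (field; lra).
      assert (P1 : INR r * INR r * (2 * INR N) <= INR r * INR r * (INR lam * INR lam * INR M)).
      { apply Rmult_le_compat_l; [nra|lra]. }
      assert (P2 : 0 <= INR r * INR N * (INR r - 1)) by (apply Rmult_le_pos; [nra|lra]).
      clear -P1 P2. nra. }
    assert (Hw' : ascending_wave n w) by (split; [exact Hpos| split; [exact Hinc| exact Hcv]]).
    assert (Hsplit : exists p, (p <= E)%nat /\ (forall i, (i < p)%nat -> d phi i < 1) /\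
               (forall i, (p <= i < E)%nat -> 1 <= d phi i)).
    { destruct (first_fail (fun i => d phi i < 1) 0 E ltac:(lia)) as [Hall|[j [Hj [Hnj Hbef]]]].
      - exists E. split; [lia|]. split; [intros i Hi; apply Hall; lia| intros; lia].
      - exists j. split; [lia|]. split; [intros i Hi; apply Hbef; lia|].
        intros i Hi. apply Rnot_lt_ge in Hnj.
        pose proof (d_mono phi E r col0 kappa Hr1 Hc0r Hkap Hconv j i ltac:(lia) ltac:(lia)). lra. }
    destruct Hsplit as [p [HpE [Hpre Hpost]]].
    assert (Hstep : forall i, (i < p)%nat -> (bb M N (w (S i)) <= bb M N (w i) + 1)%nat).
    { intros i Hi. specialize (Hpre i Hi). unfold d in Hpre.
      destruct (base_Int_part (phi (S i))) as [B1 _]. destruct (base_Int_part (phi i)) as [_ B2].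
      assert (IZR (Int_part (phi (S i))) < IZR (Int_part (phi i) + 2)) by (rewrite plus_IZR; lra).
      apply lt_IZR in H. rewrite !Hint in H. lia. }
    set (m0 := (bb M N (w 0%nat) mod r)%nat).
    set (a0 := if (m0 <=? col0)%nat then (col0 - m0)%nat else (col0 + r - m0)%nat).
    assert (Hm0 : (m0 < r)%nat) by (apply Nat.mod_upper_bound; lia).
    assert (Hm0c : m0 <> col0) by (apply (Hnot 0%nat); lia).
    assert (Ha0 : (1 <= a0 <= r - 1)%nat).
    { unfold a0. destruct (Nat.leb_spec m0 col0); lia. }
    assert (Ha0m : ((bb M N (w 0%nat) + a0) mod r = col0)%nat).
    { pose proof (Nat.div_mod_eq (bb M N (w 0%nat)) r) as Ed. fold m0 in Ed.
      unfold a0. destruct (Nat.leb_spec m0 col0).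
      - symmetry. apply (Nat.mod_unique _ _ (bb M N (w 0%nat) / r)); lia.
      - symmetry. apply (Nat.mod_unique _ _ (bb M N (w 0%nat) / r + 1)); lia. }
    assert (Hbelow : forall i, (i <= p)%nat -> (bb M N (w i) < bb M N (w 0%nat) + a0)%nat).
    { induction i; intros Hi; [lia|].
      specialize (IHi ltac:(lia)). specialize (Hstep i ltac:(lia)).
      destruct (Nat.eq_dec (bb M N (w (S i))) (bb M N (w 0%nat) + a0)) as [Eq|Ne].
      - exfalso. apply (Hnot (S i) ltac:(unfold E in HpE; lia)). rewrite Eq. exact Ha0m.
      - pose proof (bb_mono M N HN HM (w i) (w (S i))). 
        pose proof (Hinc i ltac:(unfold E in HpE; lia)). replace (i+1)%nat with (S i) in H0 by lia.
        specialize (H ltac:(lia)). lia. }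
    pose proof (count_cells r M N col' HN HM k' Hgood a0 n w 0 p Hw' ltac:(unfold E in HpE; lia) ltac:(lia)
      (fun i Hi => Hmono i ltac:(unfold E in HpE; lia)) (fun i Hi => Hbelow i ltac:(lia))) as Hcount.
    pose proof (cross_all phi E r col0 kappa c0 Hr1 Hc0r Hkap Hc0 Hc0k Hconv Hallow (INR lam) Hlr p HpE
       ltac:(lra) Hpost) as Hcross.
    assert (HF : F r c0 (INR lam) 1 <= 16 * INR r * INR r * INR lam * (1 + ln (INR lam)) + 16 / 3 * INR r * INR r * INR lam).
    { unfold F. pose proof (ln_one_minus_delta r Hr1).
      assert (delta r <= / 4).
      { unfold delta. apply Rinv_le_contravar; lra. }
      unfold c0.
      assert (0 <= INR r * INR r * INR lam) by (apply Rmult_le_pos; [nra|lra]).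
      nra. }
    assert (Hphi : phi E - phi p <= 3 * INR lam / 4 * INR lam).
    { assert (0 <= phi p) by (unfold phi; unfold Rdiv; apply Rmult_le_pos; [apply pos_INR| left; apply Rinv_0_lt_compat; lra]).
      assert (phi E <= INR (TT N * N + N * N)%nat / INR (UU M N)).
      { unfold phi. unfold Rdiv. apply Rmult_le_compat_r; [left; apply Rinv_0_lt_compat; lra|].
        apply le_INR. pose proof (HwN E ltac:(unfold E; lia)). nia. }
      rewrite plus_INR, !mult_INR, ET, EU in H0.
      replace ((2 * INR N * INR N + INR N * INR N) / (2 * INR N * INR M)) with (3 * INR N / (2 * INR M)) in H0 by (field; lra).
      assert (3 * INR N / (2 * INR M) <= 3 * INR lam / 4 * INR lam).
      { apply (Rmult_le_reg_r (2 * INR M)); [lra|].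
        replace (3 * INR N / (2 * INR M) * (2 * INR M)) with (3 * INR N) by (field; lra). nra. }
      lra. }
    assert (Hdiv : (phi E - phi p) / INR lam <= 3 * INR lam / 4).
    { apply (Rmult_le_reg_r (INR lam)); [lra|].
      replace ((phi E - phi p) / INR lam * INR lam) with (phi E - phi p) by (field; lra). lra. }
    assert (Hlnl : 0 <= ln (INR lam)) by (rewrite <- ln_1; destruct (Req_dec (INR lam) 1) as [->|]; [lra|]; left; apply ln_increasing; lra).
    assert (Hsmall : (2 * ((r - 1) * (k' - 1)) < k)%nat) by nia.
    assert (Hcnt : (p + 1 <= (r - 1) * (k' - 1))%nat) by nia.
    apply le_INR in Hcnt. apply lt_INR in Hsmall. rewrite mult_INR in Hsmall.
    simpl (INR 2) in Hsmall.
    assert (En : n = ((p + 1) + (E - p))%nat) by (unfold E in *; lia).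
    apply INR_lt. rewrite En, plus_INR.
    assert (X : INR (E - p) <= 23 * INR r * INR r * INR lam * (1 + ln (INR lam))).
    { assert (Q0 : 1 <= INR r * INR r) by (clear -Hrr; nra).
      assert (Q1 : INR lam <= INR r * INR r * INR lam).
      { rewrite <- (Rmult_1_l (INR lam)) at 1. apply Rmult_le_compat_r; lra. }
      assert (Q2 : 0 <= INR r * INR r * INR lam * ln (INR lam)) by (apply Rmult_le_pos; [apply Rmult_le_pos|]; lra).
      assert (E1 : 16 * INR r * INR r * INR lam * (1 + ln (INR lam)) = 16 * (INR r * INR r * INR lam) + 16 * (INR r * INR r * INR lam * ln (INR lam))) by ring.
      assert (E2 : 23 * INR r * INR r * INR lam * (1 + ln (INR lam)) = 23 * (INR r * INR r * INR lam) + 23 * (INR r * INR r * INR lam * ln (INR lam))) by ring.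
      assert (E3 : 16 / 3 * INR r * INR r * INR lam = 16 / 3 * (INR r * INR r * INR lam)) by ring.
      rewrite E1, E3 in HF. rewrite E2.
      clear -Q1 Q2 HF Hdiv Hcross Hlr. clearbody phi c0 E. lra. }
    lra.
Qed.
End Step.

Open Scope R_scope.
Open Scope R_scope.

Lemma nat_above : forall x, 0 <= x -> exists K : nat, x < INR K.
Proof.
  intros x Hx. destruct (archimed x) as [H1 H2].
  assert (Hp : (0 <= up x)%Z). { assert (-1 < up x)%Z by (apply lt_IZR; lra). lia. }
  exists (Z.to_nat (up x)). rewrite INR_IZR_INZ, Z2Nat.id by exact Hp. lra.
Qed.

Lemma Rpower_pos : forall x y, 0 < Rpower x y.
Proof. intros. unfold Rpower. apply exp_pos. Qed.

Lemma Rpower_ge1 : forall x y, 1 <= x -> 0 <= y -> 1 <= Rpower x y.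
Proof.
  intros x y Hx Hy. rewrite <- (Rpower_O x) by lra. apply Rle_Rpower; lra.
Qed.

Lemma log2_ln : forall k : nat, (1 <= k)%nat -> INR (Nat.log2 k) <= 2 * ln (INR k).
Proof.
  intros k Hk. destruct (Nat.log2_spec k ltac:(lia)) as [H1 _].
  apply le_INR in H1. rewrite pow_INR in H1. replace (INR 2) with 2 in H1 by (simpl; lra).
  assert (ln (2 ^ Nat.log2 k) <= ln (INR k)).
  { destruct (Rle_lt_or_eq_dec _ _ H1) as [Hl|E]; [|rewrite E; lra].
    left. apply ln_increasing; [apply pow_lt; lra| exact Hl]. }
  rewrite ln_pow in H by lra. pose proof ln_lt_2. pose proof (pos_INR (Nat.log2 k)).
  assert (0 <= INR (Nat.log2 k) * (ln 2 - / 2)) by (apply Rmult_le_pos; lra). lra.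
Qed.

Lemma ln_log2 : forall k : nat, (1 <= k)%nat -> ln (INR k) <= INR (Nat.log2 k) + 1.
Proof.
  intros k Hk. destruct (Nat.log2_spec k ltac:(lia)) as [_ H2].
  apply lt_INR in H2. rewrite pow_INR in H2. replace (INR 2) with 2 in H2 by (simpl; lra).
  assert (1 <= INR k) by (apply (le_INR 1); lia).
  assert (ln (INR k) < ln (2 ^ S (Nat.log2 k))) by (apply ln_increasing; lra).
  rewrite ln_pow in H0 by lra. rewrite S_INR in H0.
  pose proof (ln_le_sub1 2 ltac:(lra)).
  assert (0 < ln 2) by (pose proof ln_lt_2; lra).
  assert (0 <= INR (Nat.log2 k)) by apply pos_INR. nra.
Qed.

Lemma growth : forall (a : nat) (C eps : R), 0 < eps ->
  exists K : nat, forall k, (K <= k)%nat -> C * INR (Nat.log2 k + 2) ^ a <= Rpower (INR k) eps.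
Proof.
  intros a C eps He.
  set (dl := eps / (2 * (INR a + 1))).
  assert (Ha : 0 <= INR a) by apply pos_INR.
  assert (Hdl : 0 < dl) by (unfold dl; apply Rdiv_lt_0_compat; lra).
  assert (Hadl : INR a * dl <= eps / 2).
  { unfold dl. apply (Rmult_le_reg_r (2 * (INR a + 1))); [lra|].
    replace (INR a * (eps / (2 * (INR a + 1))) * (2 * (INR a + 1))) with (INR a * eps) by (field; lra).
    nra. }
  set (B := 3 + 2 / dl).
  assert (HB : 0 < B) by (unfold B; assert (0 < 2 / dl) by (apply Rdiv_lt_0_compat; lra); lra).
  set (X := Rmax 1 (C * B ^ a)).
  assert (HX : 1 <= X) by apply Rmax_l.
  destruct (nat_above (Rpower X (/ (eps / 2)))) as [K0 HK0]; [left; apply Rpower_pos|].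
  exists (K0 + 1)%nat. intros k Hk.
  assert (Hk1 : (1 <= k)%nat) by lia.
  set (x := INR k).
  assert (Hx1 : 1 <= x) by (apply (le_INR 1); lia).
  assert (HxK : Rpower X (/ (eps / 2)) <= x).
  { unfold x. assert (INR K0 <= INR k) by (apply le_INR; lia). lra. }
  assert (HG : INR (Nat.log2 k + 2) <= B * Rpower x dl).
  { pose proof (log2_ln k Hk1) as L. fold x in L.
    assert (ln x <= Rpower x dl / dl).
    { pose proof (ln_Rpower x dl) as E. pose proof (ln_le_sub1 (Rpower x dl) (Rpower_pos x dl)).
      apply (Rmult_le_reg_l dl); [lra|]. replace (dl * (Rpower x dl / dl)) with (Rpower x dl) by (field; lra).
      lra. }
    assert (1 <= Rpower x dl) by (apply Rpower_ge1; lra).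
    rewrite plus_INR. simpl (INR 2). unfold B.
    assert (2 * ln x <= 2 / dl * Rpower x dl).
    { replace (2 / dl * Rpower x dl) with (2 * (Rpower x dl / dl)) by (field; lra). lra. }
    assert (0 < 2 / dl) by (apply Rdiv_lt_0_compat; lra). nra. }
  assert (HG0 : 0 <= INR (Nat.log2 k + 2)) by apply pos_INR.
  assert (HGa : INR (Nat.log2 k + 2) ^ a <= B ^ a * Rpower x (INR a * dl)).
  { replace (Rpower x (INR a * dl)) with (Rpower x dl ^ a).
    2:{ rewrite <- Rpower_pow by apply Rpower_pos. rewrite Rpower_mult. f_equal. ring. }
    rewrite <- Rpow_mult_distr. apply pow_incr. split; lra. }
  assert (Hxa : 0 < Rpower x (INR a * dl)) by apply Rpower_pos.
  assert (Hfin : X * Rpower x (INR a * dl) <= Rpower x eps).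
  { replace (Rpower x eps) with (Rpower x (INR a * dl + (eps - INR a * dl))) by (f_equal; ring).
    rewrite Rpower_plus. rewrite Rmult_comm. apply Rmult_le_compat_l; [lra|].
    assert (X <= Rpower x (eps / 2)).
    { replace X with (Rpower (Rpower X (/ (eps / 2))) (eps / 2)).
      2:{ rewrite Rpower_mult. replace (/ (eps / 2) * (eps / 2)) with 1 by (field; lra). apply Rpower_1; lra. }
      apply Rle_Rpower_l; [lra|]. split; [apply Rpower_pos|exact HxK]. }
    assert (Rpower x (eps / 2) <= Rpower x (eps - INR a * dl)) by (apply Rle_Rpower; lra).
    lra. }
  destruct (Rle_or_lt C 0) as [Hc|Hc].
  - assert (0 <= INR (Nat.log2 k + 2) ^ a) by (apply pow_le; lra).
    pose proof (Rpower_pos x eps). nra.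
  - assert (C * B ^ a <= X) by apply Rmax_r.
    assert (C * INR (Nat.log2 k + 2) ^ a <= C * (B ^ a * Rpower x (INR a * dl))) by (apply Rmult_le_compat_l; lra).
    assert (C * (B ^ a * Rpower x (INR a * dl)) <= X * Rpower x (INR a * dl)).
    { rewrite <- Rmult_assoc. apply Rmult_le_compat_r; lra. }
    lra.
Qed.

Open Scope R_scope.
Open Scope R_scope.

Definition gk (k : nat) : R := INR (Nat.log2 k + 2).

Lemma gk_ge1 : forall k, 1 <= gk k.
Proof. intro k. unfold gk. apply (le_INR 1). lia. Qed.

Lemma gk_mono : forall a b, (a <= b)%nat -> gk a <= gk b.
Proof. intros a b H. unfold gk. apply le_INR. pose proof (Nat.log2_le_mono a b H). lia. Qed.

Lemma div_lower : forall a b : nat, (0 < b)%nat -> INR a / INR b - 1 < INR (a / b).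
Proof.
  intros a b Hb. pose proof (Nat.div_mod_eq a b). pose proof (Nat.mod_upper_bound a b ltac:(lia)).
  assert (Hbr : 0 < INR b) by (apply lt_0_INR; lia).
  assert (INR a < INR b * (INR (a / b) + 1)).
  { replace 1 with (INR 1) by reflexivity. rewrite <- plus_INR, <- mult_INR. apply lt_INR. nia. }
  apply (Rmult_lt_reg_l (INR b)); [lra|].
  replace (INR b * (INR a / INR b - 1)) with (INR a - INR b) by (field; lra). lra.
Qed.

Lemma div_upper : forall a b : nat, (0 < b)%nat -> INR (a / b) * INR b <= INR a.
Proof.
  intros a b Hb. rewrite <- mult_INR. apply le_INR. pose proof (Nat.div_mod_eq a b). nia.
Qed.

Lemma exists_r : forall r, (1 <= r)%nat -> exists C : R, 0 < C /\ exists K : nat, forall k, (K <= k)%nat ->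
  exists N col, (1 <= N)%nat /\ Good r k N col /\ INR k ^ (2 * r - 1) <= C * INR N * gk k ^ (2 * r - 2).
Proof.
  induction r as [|r' IH]; intros Hr; [lia|].
  destruct (Nat.eq_dec r' 0) as [->|Hr'].
  - exists 2. split; [lra|]. exists 2%nat. intros k Hk.
    exists (k - 1)%nat, (fun _ => 0%nat). split; [lia|]. split.
    + apply good_base. lia.
    + simpl. rewrite minus_INR by lia. simpl. assert (2 <= INR k) by (apply (le_INR 2); lia). lra.
  - destruct (IH ltac:(lia)) as [C [HC [K HK]]].
    set (R1 := S r').
    set (A1 := (46 * R1 * R1)%nat).
    destruct (growth 1 (4 * INR A1) 1 ltac:(lra)) as [Kg HKg].
    exists (4 * C * (2 * INR A1) ^ 2 * (4 * INR R1) ^ (2 * r' - 1)). split.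
    { assert (0 < INR A1) by (apply lt_0_INR; unfold A1, R1; lia).
      assert (0 < INR R1) by (apply lt_0_INR; unfold R1; lia).
      repeat apply Rmult_lt_0_compat; try lra; apply pow_lt; lra. }
    exists (Kg + 2 * R1 * (K + 2))%nat. intros k Hk.
    assert (HR1 : (2 <= R1)%nat) by (unfold R1; lia).
    assert (Hkr : 1 <= INR k) by (apply (le_INR 1); lia).
    assert (HA1g : 4 * INR A1 * gk k <= INR k).
    { specialize (HKg k ltac:(lia)). rewrite pow_1 in HKg. rewrite Rpower_1 in HKg by lra. exact HKg. }
    set (k' := (k / (2 * R1))%nat).
    assert (Hk'K : (K <= k')%nat).
    { unfold k'. apply Nat.div_le_lower_bound; lia. }
    assert (Hk'1 : (1 <= k')%nat).
    { unfold k'. apply Nat.div_le_lower_bound; lia. }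
    destruct (HK k' Hk'K) as [M [col' [HM [Hg' Hb']]]].
    set (G := (Nat.log2 k + 2)%nat).
    set (lam := (k / (A1 * G))%nat).
    assert (HGpos : (0 < A1 * G)%nat) by (unfold A1, G, R1; lia).
    assert (HA1r : 0 < INR A1) by (apply lt_0_INR; unfold A1, R1; lia).
    assert (EG : INR (A1 * G) = INR A1 * gk k) by (rewrite mult_INR; reflexivity).
    assert (Hlam_lo : INR k / (2 * (INR A1 * gk k)) <= INR lam).
    { pose proof (div_lower k (A1 * G) HGpos) as L. fold lam in L. rewrite EG in L.
      pose proof (gk_ge1 k).
      assert (4 <= INR k / (INR A1 * gk k)).
      { apply (Rmult_le_reg_r (INR A1 * gk k)); [nra|].
        replace (INR k / (INR A1 * gk k) * (INR A1 * gk k)) with (INR k) by (field; nra). lra. }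
      replace (INR k / (2 * (INR A1 * gk k))) with (INR k / (INR A1 * gk k) / 2) by (field; nra). lra. }
    assert (Hlam_hi : INR lam * (INR A1 * gk k) <= INR k).
    { pose proof (div_upper k (A1 * G) HGpos) as U. fold lam in U. rewrite EG in U. exact U. }
    assert (Hlam2 : (2 <= lam)%nat).
    { assert (2 <= INR lam).
      { pose proof (gk_ge1 k).
        assert (4 <= INR k / (INR A1 * gk k)).
        { apply (Rmult_le_reg_r (INR A1 * gk k)); [nra|].
          replace (INR k / (INR A1 * gk k) * (INR A1 * gk k)) with (INR k) by (field; nra). lra. }
        replace (INR k / (2 * (INR A1 * gk k))) with (INR k / (INR A1 * gk k) / 2) in Hlam_lo by (field; nra). lra. }
      apply INR_le. simpl. lra. }
    set (N := (lam * lam * M / 2)%nat).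
    assert (HN2 : (2 * N <= lam * lam * M)%nat) by (unfold N; pose proof (Nat.div_mod_eq (lam*lam*M) 2); pose proof (Nat.mod_upper_bound (lam*lam*M) 2 ltac:(lia)); lia).
    assert (HN4 : (lam * lam * M <= 2 * N + 1)%nat) by (unfold N; pose proof (Nat.div_mod_eq (lam*lam*M) 2); pose proof (Nat.mod_upper_bound (lam*lam*M) 2 ltac:(lia)); lia).
    assert (HN1 : (1 <= N)%nat) by nia.
    exists N, (colr R1 M N col'). split; [exact HN1|]. split.
    + apply (step_good R1 M N k' k lam col'); try lia.
      * unfold k'. pose proof (Nat.div_mod_eq k (2 * R1)). nia.
      * replace (R1 - 1)%nat with r' by (unfold R1; lia). exact Hg'.
      *
        assert (Hll : ln (INR lam) <= ln (INR k)).
        { assert (1 <= INR lam) by (apply (le_INR 1); lia).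
          assert (INR lam <= INR k).
          { pose proof (gk_ge1 k). assert (1 <= INR A1 * gk k) by (assert (1 <= INR A1) by (apply (le_INR 1); unfold A1, R1; lia); nra). nra. }
          destruct (Rle_lt_or_eq_dec _ _ H0) as [Hl|E']; [left; apply ln_increasing; lra| rewrite E'; lra]. }
        pose proof (ln_log2 k ltac:(lia)) as Lk.
        assert (H1l : 1 + ln (INR lam) <= gk k) by (unfold gk; rewrite plus_INR; simpl (INR 2); lra).
        assert (EA : INR A1 = 46 * INR R1 * INR R1) by (unfold A1; rewrite !mult_INR; simpl; lra).
        assert (0 <= 23 * INR R1 * INR R1 * INR lam).
        { assert (0 <= INR R1) by apply pos_INR. assert (0 <= INR lam) by apply pos_INR.
          repeat apply Rmult_le_pos; lra. }
        assert (23 * INR R1 * INR R1 * INR lam * (1 + ln (INR lam)) <= 23 * INR R1 * INR R1 * INR lam * gk k)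
          by (apply Rmult_le_compat_l; lra).
        rewrite EA in Hlam_hi. lra.
    +
      set (e := (2 * r' - 1)%nat).
      set (x := INR k). set (g := gk k).
      assert (Hg1 : 1 <= g) by apply gk_ge1.
      assert (HR1r : 2 <= INR R1) by (apply (le_INR 2); lia).
      assert (Hk4 : 4 * INR R1 <= x).
      { unfold x. replace 4 with (INR 4) by (simpl; lra). rewrite <- mult_INR. apply le_INR. nia. }
      assert (Hk'lo : x / (4 * INR R1) <= INR k').
      { pose proof (div_lower k (2 * R1) ltac:(lia)) as L. fold k' in L. rewrite mult_INR in L. simpl (INR 2) in L.
        fold x in L.
        assert (x / (2 * INR R1) - 1 >= x / (4 * INR R1)).
        { assert (Eq0 : x / (2 * INR R1) - 1 - x / (4 * INR R1) = (x - 4 * INR R1) / (4 * INR R1)) by (field; lra).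
          assert (0 <= (x - 4 * INR R1) / (4 * INR R1)).
          { unfold Rdiv. apply Rmult_le_pos; [lra| left; apply Rinv_0_lt_compat; lra]. }
          lra. }
        replace ((1+1) * INR R1) with (2 * INR R1) in L by ring. lra. }
      assert (Hgk' : gk k' <= g) by (apply gk_mono; unfold k'; apply Nat.div_le_upper_bound; lia).
      assert (HM1 : 1 <= INR M) by (apply (le_INR 1); lia).
      assert (Hxe : x ^ e <= (4 * INR R1) ^ e * (C * INR M * g ^ (2 * r' - 2))).
      { replace (x ^ e) with ((4 * INR R1) ^ e * (x / (4 * INR R1)) ^ e).
        2:{ rewrite <- Rpow_mult_distr. f_equal. field. lra. }
        apply Rmult_le_compat_l; [apply pow_le; lra|].
        assert (0 <= x / (4 * INR R1)) by (unfold Rdiv; apply Rmult_le_pos; [lra| left; apply Rinv_0_lt_compat; lra]).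
        eapply Rle_trans; [apply pow_incr; split; [exact H| exact Hk'lo]|].
        eapply Rle_trans; [exact Hb'|].
        apply Rmult_le_compat_l; [nra|]. apply pow_incr. split; [pose proof (gk_ge1 k'); lra| exact Hgk']. }
      assert (Hx2 : x ^ 2 <= (2 * INR A1) ^ 2 * g ^ 2 * (INR lam * INR lam)).
      { assert (x <= 2 * INR A1 * g * INR lam).
        { apply (Rmult_le_reg_r (/ (2 * (INR A1 * g)))).
          { apply Rinv_0_lt_compat. nra. }
          replace (2 * INR A1 * g * INR lam * / (2 * (INR A1 * g))) with (INR lam) by (field; nra).
          exact Hlam_lo. }
        assert (0 <= x) by lra.
        assert (x * x <= (2 * INR A1 * g * INR lam) * (2 * INR A1 * g * INR lam)) by (apply Rmult_le_compat; lra).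
        replace (x ^ 2) with (x * x) by ring.
        replace ((2 * INR A1) ^ 2 * g ^ 2 * (INR lam * INR lam)) with ((2 * INR A1 * g * INR lam) * (2 * INR A1 * g * INR lam)) by ring.
        exact H1. }
      assert (HNr : INR lam * INR lam * INR M <= 4 * INR N).
      { assert (E1 : INR (lam * lam * M) = INR lam * INR lam * INR M) by (rewrite !mult_INR; ring).
        apply le_INR in HN4. rewrite E1, plus_INR, mult_INR in HN4. simpl (INR 2) in HN4. simpl (INR 1) in HN4.
        assert (4 <= INR lam * INR lam * INR M).
        { assert (2 <= INR lam) by (apply (le_INR 2); lia). nra. }
        lra. }
      replace (2 * R1 - 1)%nat with (e + 2)%nat by (unfold e, R1; lia).
      replace (2 * R1 - 2)%nat with ((2 * r' - 2) + 2)%nat by (unfold R1; lia).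
      rewrite !pow_add.
      set (P := g ^ (2 * r' - 2)).
      assert (HP : 0 <= P) by (apply pow_le; lra).
      assert (He : 0 <= (4 * INR R1) ^ e) by (apply pow_le; lra).
      assert (Hx0 : 0 <= x ^ e) by (apply pow_le; lra).
      assert (Hx20 : 0 <= x ^ 2) by (apply pow_le; lra).
      assert (Hg2 : 0 <= g ^ 2) by (apply pow_le; lra).
      assert (HA2 : 0 <= (2 * INR A1) ^ 2) by (apply pow_le; lra).
      assert (Step1 : x ^ e * x ^ 2 <= ((4 * INR R1) ^ e * (C * INR M * P)) * ((2 * INR A1) ^ 2 * g ^ 2 * (INR lam * INR lam))).
      { apply Rmult_le_compat; try assumption. }
      assert (Eq : ((4 * INR R1) ^ e * (C * INR M * P)) * ((2 * INR A1) ^ 2 * g ^ 2 * (INR lam * INR lam))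
        = (C * (2 * INR A1) ^ 2 * (4 * INR R1) ^ e * P * g ^ 2) * (INR lam * INR lam * INR M)) by ring.
      rewrite Eq in Step1.
      assert (0 <= C * (2 * INR A1) ^ 2 * (4 * INR R1) ^ e * P * g ^ 2).
      { repeat apply Rmult_le_pos; lra. }
      assert (Step2 : (C * (2 * INR A1) ^ 2 * (4 * INR R1) ^ e * P * g ^ 2) * (INR lam * INR lam * INR M)
          <= (C * (2 * INR A1) ^ 2 * (4 * INR R1) ^ e * P * g ^ 2) * (4 * INR N)) by (apply Rmult_le_compat_l; lra).
      assert (Eq2 : (C * (2 * INR A1) ^ 2 * (4 * INR R1) ^ e * P * g ^ 2) * (4 * INR N)
         = 4 * C * (2 * INR A1) ^ 2 * (4 * INR R1) ^ e * INR N * (P * g ^ 2)) by ring.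
      rewrite Eq2 in Step2. lra.
Qed.

Open Scope R_scope.
Open Scope R_scope.

Theorem theorem2 :
  forall (r : nat), (1 <= r)%nat ->
  forall eps : R, 0 < eps ->
  exists K : nat, forall k : nat, (K <= k)%nat ->
    AW_ge k r
      (Rpower (INR k) (2 * INR r - 1 - eps) /
       (2 ^ (r - 1) * (40 * INR r) ^ (r * r - 1))).
Proof.
  intros r Hr eps He.
  destruct (exists_r r Hr) as [C [HC [K1 HK1]]].
  destruct (growth (2 * r - 2) C eps He) as [K2 HK2].
  exists (K1 + K2 + 1)%nat. intros k Hk.
  destruct (HK1 k ltac:(lia)) as [N [col [HN [[Gc Gw] Hb]]]].
  specialize (HK2 k ltac:(lia)).
  assert (Hkr : 1 <= INR k) by (apply (le_INR 1); lia).
  assert (Hpe : 0 < Rpower (INR k) eps) by (unfold Rpower; apply exp_pos).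
  assert (Hmain : Rpower (INR k) (2 * INR r - 1 - eps) <= INR N).
  { assert (E1 : Rpower (INR k) (2 * INR r - 1 - eps) * Rpower (INR k) eps = INR k ^ (2 * r - 1)).
    { rewrite <- Rpower_plus. replace (2 * INR r - 1 - eps + eps) with (INR (2 * r - 1)).
      - apply Rpower_pow. lra.
      - rewrite minus_INR by lia. rewrite mult_INR. simpl. ring. }
    assert (HNr : 0 <= INR N) by apply pos_INR.
    assert (INR N * (C * gk k ^ (2 * r - 2)) <= INR N * Rpower (INR k) eps).
    { apply Rmult_le_compat_l; [lra|]. unfold gk. exact HK2. }
    apply (Rmult_le_reg_r (Rpower (INR k) eps)); [lra|]. rewrite E1.
    replace (C * INR N * gk k ^ (2 * r - 2)) with (INR N * (C * gk k ^ (2 * r - 2))) in Hb by ring.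
    lra. }
  assert (HD : 1 <= 2 ^ (r - 1) * (40 * INR r) ^ (r * r - 1)).
  { assert (1 <= INR r) by (apply (le_INR 1); lia).
    assert (1 <= 2 ^ (r - 1)) by (apply pow_R1_Rle; lra).
    assert (1 <= (40 * INR r) ^ (r * r - 1)) by (apply pow_R1_Rle; lra). nra. }
  assert (Hx : Rpower (INR k) (2 * INR r - 1 - eps) / (2 ^ (r - 1) * (40 * INR r) ^ (r * r - 1)) <= INR N).
  { assert (0 < Rpower (INR k) (2 * INR r - 1 - eps)) by (unfold Rpower; apply exp_pos).
    apply (Rmult_le_reg_r (2 ^ (r - 1) * (40 * INR r) ^ (r * r - 1))); [lra|].
    unfold Rdiv. rewrite Rmult_assoc, Rinv_l, Rmult_1_r by lra. nra. }
  intros N0 HN0 Hprop.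
  destruct (Rle_or_lt (Rpower (INR k) (2 * INR r - 1 - eps) / (2 ^ (r - 1) * (40 * INR r) ^ (r * r - 1))) (INR N0)) as [Hok|Hlt]; [exact Hok|].
  exfalso.
  assert (HN0N : (N0 < N)%nat) by (apply INR_lt; lra).
  destruct (Hprop col (fun x Hx => Gc x ltac:(lia))) as [w [Hw [HwN Hmono]]].
  assert (k < k)%nat.
  { apply (Gw k w Hw).
    - intros i Hi. specialize (HwN i Hi). lia.
    - intros i Hi. apply Hmono; lia. }
  lia.
Qed.
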